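(* Let $k\ge 2$ and let $G$ be a finite simple graph admitting a closed neighborhood balanced $k$-coloring $c$ with color classes $V_1,\dots,V_k$. Then for all distinct $i,j\in\{1,\dots,k\}$, $$|E(V_i,V_j)|=\frac{2|E(G)|+|V(G)|}{k^2},$$ and for every $i\in\{1,\dots,k\}$, $$|E(V_i,V_i)|=\frac{2|E(G)|+|V(G)|}{2k^2}-\frac{|V_i|}{2}.$$
   Context: For a vertex $v$, $N[v]=\{v\}\cup\{u : uv\in E(G)\}$. A closed neighborhood balanced $k$-coloring of $G$ is a map $c: V(G)\to\{1,\dots,k\}$ such that for every vertex $v$ the numbers $|\{u\in N[v] : c(u)=i\}|$, $i=1,\dots,k$, are all equal; its color classes are $V_i=c^{-1}(i)$. For $X,Y\subseteq V(G)$, $E(X,Y)$ is the set of edges joining a vertex of $X$ to a vertex of $Y$; $E(X,X)$ is the set of edges with both endpoints in $X$. *)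

(* Defs.v *)
From mathcomp Require Import all_boot all_order all_algebra.
Set Implicit Arguments. Unset Strict Implicit. Unset Printing Implicit Defensive.

Definition simple_graph (T : finType) (e : rel T) : Prop :=
  symmetric e /\ irreflexive e.

Definition closed_nbhd (T : finType) (e : rel T) (v : T) : {set T} :=
  [set u | (u == v) || e v u].

Definition edge_set (T : finType) (e : rel T) : {set {set T}} :=
  [set s : {set T} | [exists x, exists y, e x y && (s == [set x; y])]].

Definition edges_between (T : finType) (e : rel T) (X Y : {set T})
  : {set {set T}} :=
  [set s : {set T} | [exists x in X, exists y in Y, e x y && (s == [set x; y])]].

Definition color_class (T : finType) (k : nat) (c : T -> 'I_k) (i : 'I_k)
  : {set T} := [set v | c v == i].

Definition cnb_coloring (T : finType) (e : rel T) (k : nat) (c : T -> 'I_k)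
  : Prop :=
  forall (v : T) (i j : 'I_k),
    #|closed_nbhd e v :&: color_class c i| = #|closed_nbhd e v :&: color_class c j|.

(* Main.v *)
Require Import Defs.
From mathcomp Require Import all_boot all_order all_algebra.
From mathcomp Require Import ring.
Import GRing.Theory Num.Theory.

Section Helpers.
Local Open Scope nat_scope.
Variables (T : finType) (e : rel T).

Definition Pp (X Y : {set T}) : {set T * T} :=
  [set p : T * T | [&& p.1 \in X, p.2 \in Y & e p.1 p.2]].

Lemma card_Pp (X Y : {set T}) : #|Pp X Y| = \sum_(x in X) #|[set y in Y | e x y]|.
Proof.
rewrite -sum1_card.
transitivity (\sum_(x in X) \sum_(y in [set y in Y | e x y]) 1).
  rewrite pair_big_dep; apply: eq_bigl => -[x y] /=.
  by rewrite !inE andbA.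
by apply: eq_bigr => x _; rewrite sum1_card.
Qed.

Lemma set2_eq (a b x y : T) : x != y -> [set a; b] = [set x; y] ->
  (a = x /\ b = y) \/ (a = y /\ b = x).
Proof.
move=> nxy E.
have ha : a \in [set x; y] by rewrite -E set21.
have hb : b \in [set x; y] by rewrite -E set22.
have hx : x \in [set a; b] by rewrite E set21.
have hy : y \in [set a; b] by rewrite E set22.
move: ha hb hx hy; rewrite !inE.
case/orP=> /eqP ->; case/orP=> /eqP ->; rewrite ?eqxx ?orbT //=.
- by rewrite eq_sym (negbTE nxy).
- by left.
- by right.
- by rewrite (negbTE nxy).
Qed.

Lemma edges_disj (X Y : {set T}) : [disjoint X & Y] ->
  #|edges_between e X Y| = #|Pp X Y|.
Proof.
move=> dXY.
have -> : edges_between e X Y = [set [set p.1; p.2] | p in Pp X Y].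
  apply/setP=> s; rewrite inE; apply/existsP/imsetP.
    case=> x /andP[xX /existsP[y /andP[yY /andP[exy /eqP->]]]].
    by exists (x, y) => //; rewrite inE /= xX yY exy.
  case=> -[x y]; rewrite inE /= => /and3P[xX yY exy] ->.
  by exists x; rewrite xX; apply/existsP; exists y; rewrite yY exy eqxx.
apply: card_in_imset => -[a b] [x y]; rewrite !inE /= => /and3P[aX bY _] /and3P[xX yY _] E.
have ha : a \in [set x; y] by rewrite -E set21.
have hb : b \in [set x; y] by rewrite -E set22.
move: ha hb; rewrite !inE => /orP[/eqP ->|/eqP ay]; last first.
  by move: (disjointFr dXY aX); rewrite ay yY.
case/orP=> [/eqP bx|/eqP -> //].
by move: (disjointFr dXY xX); rewrite -bx bY.
Qed.

Lemma edges_same (X : {set T}) : symmetric e -> irreflexive e ->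
  #|Pp X X| = 2 * #|edges_between e X X|.
Proof.
move=> se ie.
have -> : edges_between e X X = [set [set p.1; p.2] | p in Pp X X].
  apply/setP=> s; rewrite inE; apply/existsP/imsetP.
    case=> x /andP[xX /existsP[y /andP[yY /andP[exy /eqP->]]]].
    by exists (x, y) => //; rewrite inE /= xX yY exy.
  case=> -[x y]; rewrite inE /= => /and3P[xX yY exy] ->.
  by exists x; rewrite xX; apply/existsP; exists y; rewrite yY exy eqxx.
rewrite -sum1_card (partition_big_imset (fun p : T * T => [set p.1; p.2])) /=.
rewrite mulnC -sum_nat_const; apply: eq_bigr => s /imsetP[[x y]].
rewrite inE /= => /and3P[xX yX exy] ->.
have nxy : x != y by apply/eqP => exy'; move: exy; rewrite exy' ie.
rewrite sum1_card.
rewrite (@eq_card _ _ [set (x, y); (y, x)]); last first.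
  move=> -[a b]; rewrite !inE /=; apply/idP/idP.
    case/andP=> _ /eqP /= /(set2_eq _ _ _ _ nxy) [[-> ->]|[-> ->]]; by rewrite eqxx ?orbT.
  case/orP=> /eqP [-> ->]; rewrite unfold_in /= inE /= xX yX ?exy ?eqxx //=.
  by rewrite se exy setUC eqxx.
rewrite cards2; case: eqP => // -[E _]; by move: nxy; rewrite E eqxx.
Qed.

Lemma edges_sym (X Y : {set T}) : symmetric e ->
  edges_between e X Y = edges_between e Y X.
Proof.
move=> se.
suff H : forall X Y : {set T}, edges_between e X Y \subset edges_between e Y X.
  by apply/eqP; rewrite eqEsubset !H.
move=> A B; apply/subsetP=> s; rewrite !inE.
case/existsP=> x /andP[xA /existsP[y /andP[yB /andP[exy /eqP->]]]].
apply/existsP; exists y; rewrite yB; apply/existsP; exists x.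
by rewrite xA se exy setUC eqxx.
Qed.

Lemma edge_setE : edge_set e = edges_between e setT setT.
Proof.
apply/setP=> s; rewrite !inE; apply/existsP/existsP=> -[x H]; exists x; move: H.
  by move=> /existsP[y H]; rewrite in_setT /=; apply/existsP; exists y; rewrite in_setT.
by rewrite in_setT /= => /existsP[y H]; apply/existsP; exists y; move: H; rewrite in_setT.
Qed.

Lemma card_nbhd v : irreflexive e -> #|closed_nbhd e v| = 1 + #|[set y in setT | e v y]|.
Proof.
move=> ie.
have -> : closed_nbhd e v = v |: [set y in setT | e v y].
  by apply/setP=> u; rewrite !inE.
by rewrite cardsU1 !inE /= (ie v).
Qed.

Variables (k : nat) (c : T -> 'I_k).
Hypotheses (se : symmetric e) (ie : irreflexive e) (bal : cnb_coloring e c).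

Let V i := color_class c i.
Let m v := #|closed_nbhd e v :&: V (c v)|.

Lemma mE v j : #|closed_nbhd e v :&: V j| = m v.
Proof. exact: bal. Qed.

Lemma nbhd_k v : #|closed_nbhd e v| = k * m v.
Proof.
rewrite -sum1_card (partition_big c predT) //=.
transitivity (\sum_(j < k) m v); last by rewrite sum_nat_const card_ord.
apply: eq_bigr => j _; rewrite -(mE v j) -sum1_card; apply: eq_bigl => u.
by rewrite !inE.
Qed.

Lemma ncross v j : c v != j -> #|[set y in V j | e v y]| = m v.
Proof.
move=> cvj; rewrite -(mE v j); apply: eq_card => y; rewrite !inE.
case: (eqVneq y v) => [->|] //=; [by rewrite (negbTE cvj) | by rewrite andbC].
Qed.

Lemma nsame v : #|[set y in V (c v) | e v y]| + 1 = m v.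
Proof.
rewrite /m.
have -> : closed_nbhd e v :&: V (c v) = v |: [set y in V (c v) | e v y].
  apply/setP=> u; rewrite !inE; case: (eqVneq u v) => [->|] /=; first by rewrite eqxx.
  by move=> _; rewrite andbC.
by rewrite cardsU1 !inE /= (ie v) andbF addnC.
Qed.

Let S i := \sum_(v in V i) m v.

Lemma cross i j : i != j -> #|edges_between e (V i) (V j)| = S i.
Proof.
move=> nij; rewrite edges_disj; last first.
  by rewrite disjoint_subset; apply/subsetP=> v; rewrite !inE => /eqP ->.
rewrite card_Pp; apply: eq_bigr => v; rewrite inE => /eqP cv.
by apply: ncross; rewrite cv.
Qed.

Lemma same i : 2 * #|edges_between e (V i) (V i)| + #|V i| = S i.
Proof.
rewrite -edges_same // card_Pp -sum1_card -big_split /=.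
by apply: eq_big => // v; rewrite inE => /eqP <-; rewrite nsame.
Qed.

Lemma Sconst i j : S i = S j.
Proof.
case: (eqVneq i j) => [->//|nij].
by rewrite -(cross _ _ nij) edges_sym // cross // eq_sym.
Qed.

Lemma total i : k * (k * S i) = 2 * #|edge_set e| + #|T|.
Proof.
have H1 : \sum_v m v = k * S i.
  rewrite (partition_big c predT) //=.
  transitivity (\sum_(j < k) S i); last by rewrite sum_nat_const card_ord.
  apply: eq_bigr => j _; rewrite (Sconst i j); apply: eq_bigl => v.
  by rewrite !inE.
rewrite -H1 big_distrr /=.
under eq_bigr do rewrite -nbhd_k card_nbhd //.
rewrite big_split /= sum1_card addnC; congr (_ + _).
rewrite edge_setE -edges_same // card_Pp; apply: eq_bigl => x; by rewrite inE.
Qed.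

End Helpers.
Local Open Scope ring_scope.

Theorem theorem2p8 (T : finType) (e : rel T) (k : nat) (c : T -> 'I_k) :
  (2 <= k)%N ->
  simple_graph e ->
  cnb_coloring e c ->
  (forall i j : 'I_k, i != j ->
     (#|edges_between e (color_class c i) (color_class c j)|)%:R
       = ((2 * #|edge_set e| + #|T|)%:R / (k ^ 2)%:R : rat))
  /\
  (forall i : 'I_k,
     (#|edges_between e (color_class c i) (color_class c i)|)%:R
       = ((2 * #|edge_set e| + #|T|)%:R / (2 * k ^ 2)%:R
          - (#|color_class c i|)%:R / 2 : rat)).
Proof.
move=> k2 [se ie] bal.
have kn0 : (k%:R : rat) != 0 by rewrite pnatr_eq0 -lt0n (leq_trans _ k2).
split.
  move=> i j nij; rewrite -(total _ _ _ _ se ie bal i) (cross _ _ _ _ bal _ _ nij).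
  rewrite !natrM; field; exact: kn0.
move=> i; rewrite -(total _ _ _ _ se ie bal i) -(same _ _ _ c se ie i).
rewrite !natrM ?natrD ?natrM; field; exact: kn0.
Qed.
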